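(* Let $\Gamma$ be a Neumaier graph with parameters $(n,k,\lambda;a,c)$. Then the number of edges of $\Gamma$ is at least $$k(k-\lambda)+(k-c+1)(a-1)+\frac{(k-c+1)(\lambda-a+1)}{2}+\frac{(c-1)(c-2)}{2}.$$
   Context: All graphs are finite, simple, undirected and connected. A graph is edge-regular with parameters $(n,k,\lambda)$ if it has $n$ vertices, is $k$-regular, and any two adjacent vertices have exactly $\lambda$ common neighbours. A clique $C$ is a regular clique with nexus $a$ if every vertex not in $C$ has exactly $a$ neighbours in $C$. A Neumaier graph is a non-complete edge-regular graph containing a regular clique; it has parameters $(n,k,\lambda;a,c)$ if it is edge-regular with parameters $(n,k,\lambda)$ and contains a regular clique of size $c$ with nexus $a$. *)

(* Defs.v *)
From mathcomp Require Import all_boot all_order all_algebra.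
Set Implicit Arguments. Unset Strict Implicit. Unset Printing Implicit Defensive.

Definition simple_graph (T : finType) (e : rel T) : Prop :=
  symmetric e /\ irreflexive e.

Definition connected_graph (T : finType) (e : rel T) : Prop :=
  forall x y : T, connect e x y.

Definition nbhd (T : finType) (e : rel T) (x : T) : {set T} := [set y | e x y].

Definition edge_regular (T : finType) (e : rel T) (n k lambda : nat) : Prop :=
  #|T| = n /\
  (forall x : T, #|nbhd e x| = k) /\
  (forall x y : T, e x y -> #|nbhd e x :&: nbhd e y| = lambda).

Definition is_clique (T : finType) (e : rel T) (C : {set T}) : Prop :=
  forall x y, x \in C -> y \in C -> x != y -> e x y.

Definition regular_clique (T : finType) (e : rel T) (C : {set T}) (a : nat) : Prop :=
  C != set0 /\ is_clique e C /\
  (forall x, x \notin C -> #|nbhd e x :&: C| = a).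

Definition complete_graph (T : finType) (e : rel T) : Prop :=
  forall x y : T, x != y -> e x y.

Definition neumaier_graph (T : finType) (e : rel T) (n k lambda a c : nat) : Prop :=
  simple_graph e /\ connected_graph e /\ ~ complete_graph e /\
  edge_regular e n k lambda /\
  exists C : {set T}, regular_clique e C a /\ #|C| = c.

Definition num_edges (T : finType) (e : rel T) : nat :=
  #|[set p : T * T | e p.1 p.2]| %/ 2.

(* Main.v *)
Require Import Defs.
From mathcomp Require Import all_boot all_order all_algebra.
From mathcomp Require Import zify ring lra.
Import GRing.Theory Num.Theory.


Lemma card_rel (T : finType) (R : rel T) :
  #|[set p : T * T | R p.1 p.2]| = \sum_x #|[set y | R x y]|.
Proof.
rewrite -sum1_card big_mkcond /=.
rewrite (eq_bigr (fun p : T * T => (fun x y => if R x y then 1 else 0) p.1 p.2)); last by move=> p _; rewrite inE.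
rewrite -(pair_bigA _ (fun x y => if R x y then 1 else 0)) /=.
apply: eq_bigr => x _; rewrite -sum1_card [RHS]big_mkcond /=.
by apply: eq_bigr => y _; rewrite !inE.
Qed.

Lemma card_rel' (T : finType) (R : rel T) :
  #|[set p : T * T | R p.1 p.2]| = \sum_y #|[set x | R x y]|.
Proof.
rewrite card_rel.
under eq_bigr do rewrite -sum1_card big_mkcond /=.
rewrite exchange_big /=; apply: eq_bigr => y _.
by rewrite -sum1_card [RHS]big_mkcond /=; apply: eq_bigr => x _; rewrite !inE.
Qed.

Lemma card_sym_even (T : finType) (e : rel T) : symmetric e -> irreflexive e ->
  exists m, #|[set p : T * T | e p.1 p.2]| = m.*2.
Proof.
move=> sy ir.
set A := [set p : T * T | e p.1 p.2 && (enum_rank p.1 < enum_rank p.2)%N].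
set sw := fun p : T * T => (p.2, p.1).
have swi : injective sw by move=> [? ?] [? ?] [-> ->].
exists #|A|.
have -> : [set p : T * T | e p.1 p.2] = A :|: sw @^-1: A.
  apply/setP => [[u v]]; rewrite !inE /= (sy v u).
  case: (boolP (e u v)) => //= euv.
  have : u != v by apply: contraTneq euv => ->; rewrite ir.
  rewrite -(inj_eq enum_rank_inj) neq_ltn; done.
rewrite cardsU card_preimset // -addnn.
have -> : A :&: sw @^-1: A = set0.
  apply/setP => [[u v]]; rewrite !inE /=.
  by apply/negP => /andP [/andP [_ h1] /andP [_ h2]]; lia.
by rewrite cards0 subn0.
Qed.

Local Open Scope ring_scope.

Theorem proposition3p8 (T : finType) (e : rel T) (n k lambda a c : nat) :
  neumaier_graph e n k lambda a c ->
  (k%:Q * (k%:Q - lambda%:Q) + (k%:Q - c%:Q + 1) * (a%:Q - 1)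
   + (k%:Q - c%:Q + 1) * (lambda%:Q - a%:Q + 1) / 2
   + (c%:Q - 1) * (c%:Q - 2) / 2) <= (num_edges e)%:Q.
Proof.
move=> [[sy ir] [_ [_ [[Hn [Hk Hl]] [C [[C0 [Ccl Ca]] Hc]]]]]].
case/set0Pn: C0 => x xC.
set Cx := C :\ x.
set D := nbhd e x :\: C.
have exx : forall z, e z z = false by move=> z; apply: ir.
have F1 : (#|D| + #|Cx| = k)%N.
  have -> : Cx = nbhd e x :&: C.
    apply/setP => z; rewrite !inE; case: (eqVneq z x) => [->|zx] /=.
      by rewrite exx.
    case zC: (z \in C); rewrite ?andbF ?andbT //; apply/esym/Ccl => //; by rewrite eq_sym.
  have := cardsID C (nbhd e x); rewrite Hk -/D; lia.
have F1' : (#|Cx|.+1 = c)%N by rewrite -Hc (cardsD1 x C) xC.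
set P := #|[set p : T * T | (p.1 \in Cx) && (p.2 \in D) && e p.1 p.2]|.
have F2 : (P + #|Cx| * #|Cx| = #|Cx| * lambda.+1)%N.
  rewrite /P (@card_rel T (fun y z => (y \in Cx) && (z \in D) && e y z)).
  rewrite (bigID (fun y => y \in Cx)) /= [X in (_ + X + _)%N]big1; last first.
    move=> y /negbTE yn; apply/eqP; rewrite cards_eq0; apply/eqP/setP => z.
    by rewrite in_set yn in_set0.
  rewrite addn0 -!sum_nat_const -big_split /=; apply: eq_bigr => y yCx.
  have /andP[yx yC] : (y != x) && (y \in C) by rewrite -in_setD1.
  have exy : e x y by apply: Ccl => //; rewrite eq_sym.
  have -> : [set z | (y \in Cx) && (z \in D) && e y z] = (nbhd e x :&: nbhd e y) :\: C.
    apply/setP => z; rewrite in_set yCx /= !inE.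
    by case: (e x z); case: (z \in C); case: (e y z).
  have H1 := cardsID C (nbhd e x :&: nbhd e y); rewrite (Hl x y exy) in H1.
  have E1 : nbhd e x :&: nbhd e y :&: C = C :\: [set x; y].
    apply/setP => z; rewrite !inE.
    case: (eqVneq z x) => [->|zx]; first by rewrite exx.
    case: (eqVneq z y) => [->|zy]; first by rewrite exx !andbF.
    case zC: (z \in C); rewrite ?andbF //= andbT.
    by rewrite Ccl 1?eq_sym // Ccl 1?eq_sym.
  rewrite E1 in H1.
  have H2 := cardsID [set x; y] C.
  have E2 : C :&: [set x; y] = [set x; y].
    by apply/setIidPr/subsetP => z; rewrite !inE => /orP[]/eqP->.
  rewrite E2 cards2 eq_sym yx Hc in H2.
  have H3 := cardsD1 x C; rewrite xC Hc -/Cx in H3.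
  lia.
have F3 : (P + #|D| = #|D| * a)%N.
  rewrite /P (@card_rel' T (fun y z => (y \in Cx) && (z \in D) && e y z)).
  rewrite (bigID (fun z => z \in D)) /= [X in (_ + X + _)%N]big1; last first.
    move=> z /negbTE zn; apply/eqP; rewrite cards_eq0; apply/eqP/setP => y.
    by rewrite in_set zn andbF in_set0.
  rewrite addn0 -sum_nat_const -sum1_card -big_split /=; apply: eq_bigr => z zD.
  have /andP[zC exz] : (z \notin C) && (z \in nbhd e x) by rewrite -in_setD.
  have ezx : e z x by rewrite sy; move: exz; rewrite inE.
  have -> : [set y | (y \in Cx) && (z \in D) && e y z] = (nbhd e z :&: C) :\ x.
    apply/setP => y; rewrite in_set zD andbT (sy y z) !inE.
    by case: (y \in C); case: (y != x); case: (e z y).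
  have H1 := cardsD1 x (nbhd e z :&: C); rewrite (Ca z zC) !inE ezx xC /= in H1.
  lia.
have F4 : (k * k.*2 <= k * (n + lambda))%N.
  case: (posnP k) => [->|kp] //; rewrite leq_mul2l.
  have : (0 < #|nbhd e x|)%N by rewrite Hk.
  case/card_gt0P => y; rewrite inE => exy.
  set U := x |: nbhd e x.
  set R := nbhd e y :\: U.
  have HU : #|U| = k.+1 by rewrite cardsU1 Hk !inE exx.
  have HR : (#|R| + #|U| <= n)%N.
    rewrite -Hn -(cardsC U) addnC leq_add2l; apply: subset_leq_card.
    by apply/subsetP => z; rewrite !inE => /andP[].
  have H1 := cardsID U (nbhd e y); rewrite Hk in H1.
  have H2 : (#|nbhd e y :&: U| <= lambda.+1)%N.
    apply: (@leq_trans #|x |: (nbhd e x :&: nbhd e y)|).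
      apply: subset_leq_card; apply/subsetP => z; rewrite !inE.
      move=> /andP[eyz /orP[/eqP->|exz]]; first by rewrite eqxx.
      by rewrite exz eyz orbT.
    by rewrite cardsU1 (Hl x y exy); case: (_ \notin _).
  rewrite orbC; apply/orP; left. rewrite -/R in H1; lia.
have [m Hm] := @card_sym_even T e sy ir.
have Hm2 : (m.*2 = n * k)%N.
  rewrite -Hm (@card_rel T e); under eq_bigr do rewrite -/(nbhd e _) Hk.
  by rewrite sum_nat_const -Hn.
rewrite /num_edges Hm -muln2 mulnK //.
rewrite -F1' -F1 in F4 Hm2 *.
move: F2 F3 F4 Hm2; clearbody P.
move: #|D| #|Cx| P => d s p F2 F3 F4 Hm2.
have cq := fun (u v : nat) (h : u = v) => congr1 (fun t : nat => (t%:R : rat)) h.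
have := cq _ _ F2; have := cq _ _ F3; have := cq _ _ Hm2.
have : (((d + s) * (d + s).*2)%:R <= ((d + s) * (n + lambda))%:R :> rat)%R by rewrite ler_nat.
rewrite /= -!pmulrn -[s.+1]addn1 -[lambda.+1]addn1 -!muln2 !(natrD, natrM).
move: (d%:R)%R (s%:R)%R (p%:R)%R (m%:R)%R (n%:R)%R (a%:R)%R (lambda%:R)%R => D' S' P' M' N' A' L'.
move=> G4 G1 G2 G3. lra.
Qed.
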